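(* Let $\alpha,s,t\in\mathbb{C}$ with $w=\tfrac12(s+t)$ and $l+w\neq0$ for all $l\in\mathbb{Z}$. For all $u,v\in\mathbb{C}$ and all $a,b,c\in\mathbb{Z}$ with $|a-b|=|b-c|=1$, $$R^{(1,1)}(u-v)\,\psi^{(1)}(u)^a_b\otimes\psi^{(1)}(v)^b_c=\sum_{b'\in\mathbb{Z}}\psi^{(1)}(u)^{b'}_c\otimes\psi^{(1)}(v)^a_{b'}\,W^{(1,1)}\left(\begin{smallmatrix} a& b\\ b'& c\end{smallmatrix}\middle|u-v\right).$$
   Context: $\mathbb{C}^2$ has basis $e_1,e_2$ (vectors written as coordinate columns) and $\mathbb{C}^2\otimes\mathbb{C}^2$ has ordered basis $e_1\otimes e_1,e_1\otimes e_2,e_2\otimes e_1,e_2\otimes e_2$, in which $$R^{(1,1)}(u)=\begin{pmatrix}u+1&0&0&0\\0&u&1&0\\0&1&u&0\\ \alpha^2u(u+1)&0&0&u+1\end{pmatrix}$$ (the rational seven-vertex $R$-matrix). Intertwining vectors: $\psi^{(1)}(u)^l_{l+1}=\begin{pmatrix}1\\ \alpha(u-l-t)\end{pmatrix}$, $\psi^{(1)}(u)^l_{l-1}=\begin{pmatrix}1\\ \alpha(u+l+s)\end{pmatrix}$, $\psi^{(1)}(u)^a_b=0$ if $|a-b|\neq1$. The weights $W^{(1,1)}\left(\begin{smallmatrix} a& b\\ d& c\end{smallmatrix}\middle|u\right)$ are zero unless $|a-b|=|b-c|=|c-d|=|d-a|=1$, and for $l\in\mathbb{Z}$ (both sign choices):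 $W^{(1,1)}\left(\begin{smallmatrix} l\pm2& l\pm1\\ l\pm1& l\end{smallmatrix}\middle|u\right)=u+1$, $W^{(1,1)}\left(\begin{smallmatrix} l& l\pm1\\ l\pm1& l\end{smallmatrix}\middle|u\right)=\frac{\mp u+l+w}{l+w}$, $W^{(1,1)}\left(\begin{smallmatrix} l& l\pm1\\ l\mp1& l\end{smallmatrix}\middle|u\right)=\frac{u(l\pm1+w)}{l+w}$. *)

(* Defs.v *)
(* C is modelled as R[i] (real-closed's complex) for R : realType. *)
From mathcomp Require Import all_boot all_algebra.
From mathcomp Require Import reals complex.
Set Implicit Arguments. Unset Strict Implicit. Unset Printing Implicit Defensive.
Import GRing.Theory Num.Theory.
Local Open Scope ring_scope.

Section Defs.
Variable F : fieldType.

Definition vec2 (x1 x2 : F) : 'cV[F]_2 :=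
  \col_(i < 2) (if nat_of_ord i == 0%N then x1 else x2).

(* tensor product C^2 (x) C^2 = C^4 with ordered basis
   e1e1, e1e2, e2e1, e2e2: index i = 2 * i1 + i2 *)
Definition tens (x y : 'cV[F]_2) : 'cV[F]_4 :=
  \col_(i < 4) (x (inord (i %/ 2)) 0 * y (inord (i %% 2)) 0).

Definition Rmat (alpha u : F) : 'M[F]_4 :=
  \matrix_(i < 4, j < 4)
    match (nat_of_ord i, nat_of_ord j) with
    | (0, 0)%N => u + 1
    | (1, 1)%N => u
    | (1, 2)%N => 1
    | (2, 1)%N => 1
    | (2, 2)%N => u
    | (3, 0)%N => alpha ^+ 2 * u * (u + 1)
    | (3, 3)%N => u + 1
    | _ => 0
    end.

Definition psi (alpha s t u : F) (a b : int) : 'cV[F]_2 :=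
  if b == a + 1 then vec2 1 (alpha * (u - a%:~R - t))
  else if b == a - 1 then vec2 1 (alpha * (u + a%:~R + s))
  else 0.

Definition wpar (s t : F) : F := (s + t) / 2.

(* Boltzmann weight W^{(1,1)} ( a b ; d c | u ) *)
Definition W (s t : F) (a b d c : int) (u : F) : F :=
  let w := wpar s t in
  if [&& absz (a - b) == 1%N, absz (b - c) == 1%N,
         absz (c - d) == 1%N & absz (d - a) == 1%N] then
    if a == c then
      if b == d then (- (b - a)%:~R * u + a%:~R + w) / (a%:~R + w)
      else u * (b%:~R + w) / (a%:~R + w)
    else if b == d then u + 1 else 0
  else 0.

End Defs.

(* Main.v *)
Require Import Defs.
From mathcomp Require Import all_boot all_algebra.
From mathcomp Require Import reals complex.
From mathcomp Require Import zify ring.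
Import GRing.Theory Num.Theory.
Local Open Scope ring_scope.

Lemma abs1 (x y : int) : absz (x - y) = 1%N -> y = x - 1 \/ y = x + 1.
Proof. move=> h; lia. Qed.

Theorem mainTheorem4 (R : realType) (alpha s t : R[i])
  (hw : forall l : int, l%:~R + wpar s t != 0)
  (u v : R[i]) (a b c : int)
  (hab : absz (a - b) = 1%N) (hbc : absz (b - c) = 1%N) :
  Rmat alpha (u - v) *m tens (psi alpha s t u a b) (psi alpha s t v b c)
  = \sum_(b' <- [:: a - 1; a; a + 1])
      W s t a b b' c (u - v) *: tens (psi alpha s t u b' c) (psi alpha s t v a b').
Proof.
have ha := hw a.
case/abs1: hab => hb; subst b; case/abs1: hbc => hc; subst c;
rewrite !big_cons big_nil /W /psi;
repeat (case: eqP => ?; try (exfalso; lia)).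
all: apply/matrixP=> i j; rewrite !mxE !big_ord_recr big_ord0 /=.
all: rewrite ?ord1; case: i => [[|[|[|[|i]]]] hi] //.
all: rewrite !mxE /= !inordK //=.
all: rewrite ?intrD ?intrB ?intrN ?rmorph1 ?mulrN1z.
all: move: ha; set w := wpar s t; set A := a%:~R => ha.
all: have two : (2:R[i]) != 0 by rewrite pnatr_eq0.
all: have hs : s = 2 * w - t by rewrite /w /wpar; field.
all: clearbody w A.
all: try (rewrite hs; field; exact: ha).
all: rewrite ?mul0r ?mul1r ?add0r ?addr0 ?mulr0 ?mulr1.
all: try by (field; exact: ha) || field.

Qed.
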